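(* Let $J\subseteq[n]$. If $\pi,\hat\pi\in S_J$ are joined by an edge of the bridge polytope $\mathrm{Br}_J$, then there exists a transposition $(i\,\ell)$ such that $\hat\pi=(i\,\ell)\pi$.
   Context: For $J\subseteq[n]$, $S_J=\{\pi\in S_n:\ \pi(j)\ge j \text{ for } j\in J,\ \pi(j)\le j \text{ for } j\notin J\}$ and $\mathrm{Br}_J=\operatorname{conv}\{(\pi(1),\dots,\pi(n)):\pi\in S_J\}\subset\mathbb{R}^n$, each $\pi\in S_J$ being identified with the vertex $(\pi(1),\dots,\pi(n))$. For a transposition $(i\,\ell)$, $(i\,\ell)\pi$ denotes $(i\,\ell)\circ\pi$, the permutation obtained from $\pi$ by swapping the values $i$ and $\ell$. *)

(* Defs.v *)
From HB Require Import structures.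
From mathcomp Require Import all_boot all_order all_algebra all_fingroup.
Set Implicit Arguments. Unset Strict Implicit. Unset Printing Implicit Defensive.
Import Order.TTheory GRing.Theory Num.Theory.
Local Open Scope ring_scope.

(* [n] is modelled by 'I_n, i.e. {0,..,n-1}; the paper's index j corresponds
   to the ordinal j-1.  Permutations of [n] are 'S_n. *)

Definition SJ (n : nat) (J : {set 'I_n}) : {set 'S_n} :=
  [set p : 'S_n | [forall j : 'I_n,
      if j \in J then (j <= p j)%N else (p j <= j)%N]].

(* the vertex (pi(1),...,pi(n)) in R^n (1-based values) *)
Definition pvec (R : realFieldType) (n : nat) (p : 'S_n) : 'rV[R]_n :=
  \row_(j < n) ((p j).+1)%:R.

Definition in_conv (R : realFieldType) (n : nat) (S : {set 'S_n})
    (x : 'rV[R]_n) : Prop :=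
  exists w : 'S_n -> R,
    (forall p, 0 <= w p) /\ \sum_(p in S) w p = 1 /\
    x = \sum_(p in S) w p *: pvec R p.

Definition in_Br (R : realFieldType) (n : nat) (J : {set 'I_n}) (x : 'rV[R]_n)
  : Prop := in_conv (SJ J) x.

Definition in_segment (R : realFieldType) (n : nat) (a b x : 'rV[R]_n) : Prop :=
  exists t : R, 0 <= t /\ t <= 1 /\ x = (1 - t) *: a + t *: b.

Definition dotr (R : realFieldType) (n : nat) (c x : 'rV[R]_n) : R :=
  \sum_(i < n) c 0 i * x 0 i.

(* pi and pihat (distinct vertices) are joined by an edge of Br_J: the segment
   [pi, pihat] is a face of Br_J, i.e. it is the intersection of Br_J with a
   supporting hyperplane { c.x = m } (with c.x <= m on Br_J). *)
Definition Br_edge (R : realFieldType) (n : nat) (J : {set 'I_n}) (p q : 'S_n)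
  : Prop :=
  p \in SJ J /\ q \in SJ J /\ p != q /\
  exists (c : 'rV[R]_n) (m : R),
    (forall x, in_Br J x -> dotr c x <= m) /\
    (forall x, (in_Br J x /\ dotr c x = m) <-> in_segment (pvec R p) (pvec R q) x).

(* Main.v *)
Require Import Defs.
From HB Require Import structures.
From mathcomp Require Import all_boot all_order all_algebra all_fingroup.
From mathcomp Require Import zify ring.
Set Implicit Arguments. Unset Strict Implicit. Unset Printing Implicit Defensive.
Import Order.TTheory GRing.Theory Num.Theory.
Lemma count_int a b m : count (fun i => (a <= i < b)%N) (iota 0 m) = minn b m - a.
Proof.
elim: m => [|m IH]; first by rewrite /= minn0.
rewrite -addn1 iotaD count_cat IH /= add0n.
case: (ltnP m b) => hmb; case: (leqP a m) => ham; lia.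
Qed.
Lemma card_int n a b : (b <= n)%N -> #|[set i : 'I_n | (a <= i < b)%N]| = b - a.
Proof.
move=> hb; rewrite cardsE cardE size_filter -enumT.
rewrite -(count_map val (fun i => (a <= i < b)%N)) val_enum_ord count_int.
by rewrite (minn_idPl hb).
Qed.

Section Key.
Variables (n : nat) (J : {set 'I_n}).
Definition inI (j v : 'I_n) : bool := if j \in J then (j <= v)%N else (v <= j)%N.
Definition valid (P Q : 'S_n) (a b : 'I_n) :=
  [/\ (P a < P b)%N, (Q b < Q a)%N & [&& inI a (P b), inI a (Q b), inI b (P a) & inI b (Q a)]].
Definition FP (P : 'S_n) := forall j, inI j (P j).
Definition Hw (P Q : 'S_n) lo hi := forall j : 'I_n, (lo <= P j <= hi) = (lo <= Q j <= hi).
Definition vac lo hi (j : 'I_n) := if j \in J then (j <= lo)%N else (hi <= j)%N.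

Lemma inI_conv j v1 v2 (w : 'I_n) : inI j v1 -> inI j v2 -> (v1 <= w <= v2)%N -> inI j w.
Proof. rewrite /inI; case: (j \in J) => h1 h2 /andP[h3 h4]; lia. Qed.

Lemma valid_sym P Q a b : valid Q P a b -> valid P Q b a.
Proof. by case=> h1 h2 /and4P[*]; split => //; apply/and4P. Qed.

Lemma vacP lo hi j (v : 'I_n) : vac lo hi j -> (lo <= v <= hi)%N -> inI j v.
Proof. rewrite /vac /inI; case: (j \in J) => h1 /andP[h2 h3]; lia. Qed.

Lemma card_pre (P : 'S_n) (A : {set 'I_n}) : #|[set j | P j \in A]| = #|A|.
Proof. exact: (card_preimset A (@perm_inj _ P)). Qed.

Lemma caseA P Q lo hi u : FP P -> FP Q -> Hw P Q lo hi -> (hi < n)%N -> (lo <= P u <= hi)%N ->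
  vac lo hi u -> (P u < Q u)%N -> exists a b, valid P Q a b.
Proof.
move=> FPP FPQ H hin Wu Vu xy.
have Wu' := Wu; rewrite H in Wu'.
pose x := P u; pose y := Q u.
pose SE := [set b | (lo <= P b <= hi) && (x < P b)%N && (Q b < y)%N].
case: (boolP [exists b, (b \in SE) && inI b x && inI b y]).
  case/existsP=> b; rewrite inE => /andP[/andP[/andP[/andP[Wb xb] yb] hx] hy].
  exists u, b; split => //; apply/and4P; split => //; apply: (vacP Vu) => //; by rewrite -H.
rewrite negb_exists => /forallP hno.
have sub : SE \subset [set b : 'I_n | (x.+1 <= b < y)%N].
  apply/subsetP => b hb; have := hno b; rewrite hb /= => hn; rewrite inE.
  move: hb; rewrite inE => /andP[/andP[Wb xb] yb].
  move: hn; have := FPP b; have := FPQ b; rewrite /inI.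
  case: (b \in J) => h1 h2;
  case: (leqP b x) => c1; case: (leqP b y) => c2; case: (leqP x b) => c3; case: (leqP y b) => c4 //=; lia.
have c1 := subset_leq_card sub.
rewrite card_int in c1; last by move: (ltn_ord (Q u)); rewrite -/y; lia.
pose A := [set b | Q b \in [set v : 'I_n | (lo <= v < y)%N]].
pose B := [set b | P b \in [set v : 'I_n | (lo <= v < x.+1)%N]].
have cA : #|A| = y - lo by rewrite card_pre card_int //; exact: ltnW.
have cB : #|B| = x.+1 - lo by rewrite card_pre card_int //.
have uB : u \in B by rewrite !inE; move: Wu; rewrite -/x; lia.
have subA : A \subset SE :|: (B :\ u).
  apply/subsetP => b; rewrite !inE => /andP[lb yb].
  have Wb : (lo <= P b <= hi)%N by rewrite H; move: Wu'; rewrite -/y; lia.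
  case: (ltnP x (P b)) => xb; first by rewrite Wb yb.
  rewrite andbF /=; apply/and3P; split => //.
    by apply/eqP => bu; move: yb; rewrite bu ltnn.
  by move: Wb; lia.
have h1 := subset_leq_card subA.
have h2 := (leq_card_setU SE (B :\ u)).1.
have h3 := cardsD1 u B; rewrite uB in h3.
move: Wu; rewrite -/x => Wu.
move: xy; rewrite -/x -/y => xy.
lia.
Qed.

Lemma keyG P Q : FP P -> FP Q -> forall k lo hi, (hi.+1 - lo <= k)%N -> (hi < n)%N ->
  Hw P Q lo hi -> (exists d, (lo <= P d <= hi) && (P d != Q d)) -> exists a b, valid P Q a b.
Proof.
move=> FPP FPQ; elim=> [|k IH] lo hi hk hin H [d /andP[Wd dd]]; first by move: Wd hk; lia.
case: (boolP [exists u, (lo <= P u <= hi) && vac lo hi u]).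
  case/existsP => u /andP[Wu Vu].
  case: (ltngtP (P u) (Q u)) => cu.
  - exact: (caseA FPP FPQ H hin Wu Vu cu).
  - have H' : Hw Q P lo hi by move=> j; rewrite H.
    have Wu' : (lo <= Q u <= hi)%N by rewrite -H.
    have [a [b hv]] := caseA FPQ FPP H' hin Wu' Vu cu.
    by exists b, a; apply: valid_sym.
  - pose x := P u.
    have WQ : forall j, (lo <= P j <= hi)%N -> (lo <= Q j <= hi)%N by move=> j; rewrite H.
    case: (boolP [exists b, (lo <= P b <= hi) && ((P b < x < Q b) || (Q b < x < P b))]).
      case/existsP => b /andP[Wb /orP[/andP[h1 h2]|/andP[h1 h2]]].
        exists b, u; split => //; first by rewrite -cu.
        apply/and4P; split.
        + by apply: (inI_conv (FPP b) (FPQ b)); rewrite ltnW // ltnW.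
        + by apply: (inI_conv (FPP b) (FPQ b)); rewrite -cu ltnW // ltnW.
        + exact: (vacP Vu).
        + exact: (vacP Vu (WQ _ Wb)).
      exists u, b; split => //; first by rewrite -cu.
      apply/and4P; split.
      + exact: (vacP Vu).
      + exact: (vacP Vu (WQ _ Wb)).
      + by apply: (inI_conv (FPQ b) (FPP b)); rewrite ltnW // ltnW.
      + by apply: (inI_conv (FPQ b) (FPP b)); rewrite -cu ltnW // ltnW.
    rewrite negb_exists => /forallP hns.
    have du : d != u by apply: contra dd => /eqP ->; rewrite -(inj_eq val_inj) /= cu.
    have nPx : forall j, j != u -> (P j : nat) != x.
      by move=> j ju; rewrite (inj_eq val_inj) (inj_eq perm_inj).
    have nQx : forall j, j != u -> (Q j : nat) != x.
      by move=> j ju; rewrite /x cu (inj_eq val_inj) (inj_eq perm_inj).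
    have Wx : (lo <= x <= hi)%N by [].
    have rows : forall j, (lo <= P j <= hi)%N -> j != u -> (P j < x)%N = (Q j < x)%N.
      move=> j Wj ju; have := hns j; rewrite Wj /= negb_or => /andP[n1 n2].
      have := nPx j ju; have := nQx j ju; move: n1 n2; lia.
    have Hout : forall j, ~~ (lo <= P j <= hi)%N -> ~~ (lo <= Q j <= hi)%N by move=> j; rewrite H.
    case: (ltngtP (P d) x) => cd.
    + apply: (IH lo x.-1); first by move: hk Wx cd; lia.
      * by move: hin Wx; lia.
      * move=> j; case Wj: (lo <= P j <= hi)%N.
          case: (eqVneq j u) => [->|ju]; first by rewrite -cu; move: cd; lia.
          have := rows j Wj ju; have := nPx j ju; have := nQx j ju; have := WQ j Wj; move: Wj; lia.
        have := Hout j (negbT Wj); move: Wj Wx; lia.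
      * by exists d; rewrite dd andbT; move: Wd cd; lia.
    + apply: (IH x.+1 hi); first by move: hk Wx cd; lia.
      * by [].
      * move=> j; case Wj: (lo <= P j <= hi)%N.
          case: (eqVneq j u) => [->|ju]; first by rewrite -cu; lia.
          have := rows j Wj ju; have := nPx j ju; have := nQx j ju; have := WQ j Wj; move: Wj; lia.
        have := Hout j (negbT Wj); move: Wj Wx; lia.
      * by exists d; rewrite dd andbT; move: Wd cd; lia.
    + by move: (nPx d du); rewrite cd eqxx.
rewrite negb_exists => /forallP hnv.
pose RR := [set j | (lo <= P j <= hi)%N].
pose SS := [set j : 'I_n | (lo <= j <= hi)%N].
have sub : RR \subset SS.
  apply/subsetP => j; rewrite !inE => Wj; have := hnv j; rewrite Wj /=.
  have := FPP j; rewrite /vac /inI; case: (j \in J) => h1 h2; move: Wj; lia.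
have cRR : #|RR| = #|SS|.
  have -> : RR = [set j | P j \in SS] by apply/setP => j; rewrite !inE.
  exact: card_pre.
have eRS : RR = SS by apply/eqP; rewrite eqEcard sub cRR leqnn.
have lon : (lo < n)%N by move: Wd (ltn_ord (P d)); lia.
pose j0 := Ordinal lon.
have j0R : j0 \in RR by rewrite eRS inE /= leqnn; move: Wd; lia.
have W0 : (lo <= P j0 <= hi)%N by move: j0R; rewrite inE.
have W0' : (lo <= Q j0 <= hi)%N by rewrite -H.
have nv := hnv j0; rewrite W0 /= /vac in nv.
have P0 : (P j0 : nat) = lo by have := FPP j0; rewrite /inI; move: nv W0; case: (j0 \in J) => /=; lia.
have Q0 : (Q j0 : nat) = lo by have := FPQ j0; rewrite /inI; move: nv W0'; case: (j0 \in J) => /=; lia.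
have dj0 : d != j0 by apply: contra dd => /eqP ->; rewrite -(inj_eq val_inj) /= P0 Q0.
apply: (IH lo.+1 hi); first by move: hk W0; lia.
- by [].
- move=> j; case: (eqVneq j j0) => [->|jj]; first by rewrite P0 Q0 ltnn.
  have nP : (P j : nat) != lo by rewrite -P0 (inj_eq val_inj) (inj_eq perm_inj).
  have nQ : (Q j : nat) != lo by rewrite -Q0 (inj_eq val_inj) (inj_eq perm_inj).
  have := H j; move: nP nQ; lia.
- exists d; rewrite dd andbT.
  have nP : (P d : nat) != lo by rewrite -P0 (inj_eq val_inj) (inj_eq perm_inj).
  by move: nP Wd; lia.
Qed.
End Key.

Lemma key_valid n (J : {set 'I_n}) (p q : 'S_n) : FP J p -> FP J q -> p != q ->
  exists a b, valid J p q a b.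
Proof.
move=> Fp Fq pq.
have [d dd] : exists d, p d != q d.
  apply/existsP; apply: contraR pq; rewrite negb_exists => /forallP h.
  by apply/eqP/permP => j; have := h j; rewrite negbK => /eqP.
have n0 : (0 < n)%N by have := ltn_ord d; lia.
apply: (@keyG n J p q Fp Fq n.+1 0 n.-1); first by lia.
- by lia.
- by move=> j; have := ltn_ord (p j); have := ltn_ord (q j); lia.
- by exists d; rewrite dd andbT; have := ltn_ord (p d); lia.
Qed.
Lemma dot_swap (R : realFieldType) n (c : 'rV[R]_n) (pi : 'S_n) (a b : 'I_n) : a != b ->
  dotr c (pvec R (tperm a b * pi)%g) =
  (dotr c (pvec R pi) + (c 0 a - c 0 b) * (((pi b).+1)%:R - ((pi a).+1)%:R))%R.
Proof.
move=> ab.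
suff h : (dotr c (pvec R (tperm a b * pi)%g) - dotr c (pvec R pi) =
  (c 0 a - c 0 b) * (((pi b).+1)%:R - ((pi a).+1)%:R))%R.
  by rewrite -h addrC subrK.
rewrite /dotr -sumrB (bigD1 a) //= (bigD1 b) /=; last by rewrite eq_sym.
rewrite big1 => [|i /andP[ia ib]]; last first.
  by rewrite !mxE permM tpermD 1?eq_sym // -mulrBr subrr mulr0.
rewrite !mxE !permM tpermL tpermR; ring.
Qed.

Lemma inBr_vert (R : realFieldType) n (J : {set 'I_n}) (r : 'S_n) : r \in SJ J -> in_Br J (pvec R r).
Proof.
move=> rS; exists (fun pi => ((pi == r)%:R : R)%R); split; first by move=> pi; rewrite ler0n.
split.
  rewrite (bigD1 r) //= eqxx big1 ?addr0 // => pi /andP[_ /negbTE ->]; done.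
rewrite (bigD1 r) //= eqxx scale1r big1 ?addr0 // => pi /andP[_ /negbTE ->]; by rewrite scale0r.
Qed.

Theorem lemma4p4 (R : realFieldType) (n : nat) (J : {set 'I_n}) (p q : 'S_n) :
  Br_edge R J p q ->
  exists i l : 'I_n, i != l /\ q = (p * tperm i l)%g.
Proof.
case=> pS [qS [pq [c [m [Hle Hiff]]]]].
have FPof : forall r : 'S_n, r \in SJ J -> FP J r by move=> r; rewrite inE => /forallP.
have SJof : forall r : 'S_n, FP J r -> r \in SJ J by move=> r h; rewrite inE; apply/forallP.
have [a [b [hab hqb /and4P[i1 i2 i3 i4]]]] := key_valid (FPof _ pS) (FPof _ qS) pq.
have ab : a != b by apply: contraTneq hab => ->; rewrite ltnn.
have swapS : forall r : 'S_n, inI J a (r b) -> inI J b (r a) -> r \in SJ J ->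
    (tperm a b * r)%g \in SJ J.
  move=> r h1 h2 rS; apply: SJof => j; rewrite permM.
  by case: tpermP => [->|->|/eqP ja /eqP jb] //; apply: FPof.
have rS := swapS p i1 i3 pS.
have sS := swapS q i2 i4 qS.
have [_ Hdp] : in_Br J (pvec R p) /\ dotr c (pvec R p) = m.
  apply/Hiff; exists 0%R; split => //; split; first exact: ler01.
  by rewrite subr0 scale1r scale0r addr0.
have [_ Hdq] : in_Br J (pvec R q) /\ dotr c (pvec R q) = m.
  apply/Hiff; exists 1%R; split; first exact: ler01; split => //.
  by rewrite subrr scale0r add0r scale1r.
have Hr := Hle _ (inBr_vert R rS).
have Hs := Hle _ (inBr_vert R sS).
rewrite dot_swap // Hdp in Hr; rewrite dot_swap // Hdq in Hs.
have hc : c 0%R a = c 0%R b.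
  have u1 : (0 < ((p b).+1)%:R - ((p a).+1)%:R :> R)%R by rewrite subr_gt0 ltr_nat ltnS.
  have u2 : (((q b).+1)%:R - ((q a).+1)%:R < 0 :> R)%R by rewrite subr_lt0 ltr_nat ltnS.
  rewrite gerDl (pmulr_lle0 _ u1) in Hr; rewrite gerDl (nmulr_lle0 _ u2) in Hs.
  by apply/eqP; rewrite -subr_eq0 eq_le Hr Hs.
have Hdr : dotr c (pvec R (tperm a b * p)%g) = m by rewrite dot_swap // hc subrr mul0r addr0.
have [t [t0 [t1 ht]]] := proj1 (Hiff _) (conj (inBr_vert R rS) Hdr).
have coord : forall j, ((((tperm a b * p)%g j).+1%:R : R) = (1 - t) * ((p j).+1)%:R + t * ((q j).+1)%:R)%R.
  by move=> j; have := congr1 (fun M : 'rV[R]_n => M 0%R j) ht; rewrite !mxE.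
have tn0 : t != 0%R.
  apply/eqP => tz; have := coord a; rewrite tz subr0 mul1r mul0r addr0 permM tpermL.
  by move/eqP; rewrite eqr_nat eqSS => /eqP /val_inj /perm_inj ba; move: ab; rewrite ba eqxx.
have qp : forall j, j != a -> j != b -> q j = p j.
  move=> j ja jb; have := coord j; rewrite permM tpermD 1?eq_sym //.
  set X := (((p j).+1)%:R : R)%R; set Y := (((q j).+1)%:R : R)%R => e.
  have : (t * (Y - X) = 0)%R.
    by transitivity ((1 - t) * X + t * Y - X)%R; [ring | rewrite -e subrr].
  move/eqP; rewrite mulf_eq0 (negbTE tn0) /= subr_eq0 /Y /X eqr_nat eqSS => /eqP.
  exact: val_inj.
have qab : forall j, j \in [:: a; b] -> q j = p a \/ q j = p b.
  move=> j hj; pose k := (p^-1 (q j))%g.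
  have pk : p k = q j by rewrite /k permKV.
  case: (eqVneq k a) => [ka|ka]; first by left; rewrite -pk ka.
  case: (eqVneq k b) => [kb|kb]; first by right; rewrite -pk kb.
  have : q k = q j by rewrite qp.
  move/perm_inj => kj; move: hj; rewrite -kj !inE (negbTE ka) (negbTE kb) //.
have [qa qb] : q a = p b /\ q b = p a.
  have nab : q a != q b by rewrite (inj_eq perm_inj).
  have hbin : b \in [:: a; b] by rewrite !inE eqxx orbT.
  case: (qab a (mem_head _ _)) => ha.
    case: (qab b hbin) => hb.
      by move: nab; rewrite ha hb eqxx.
    by move: hqb; rewrite ha hb => /(ltn_trans hab); rewrite ltnn.
  case: (qab b hbin) => hb; first by split.
  by move: nab; rewrite ha hb eqxx.
exists (p a), (p b); split; first by rewrite (inj_eq perm_inj).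
apply/permP => j; rewrite permM.
case: tpermP => [/perm_inj ->|/perm_inj ->|hja hjb] //.
by rewrite qp // ; apply/eqP => e; [apply: hja | apply: hjb]; rewrite e.
Qed.
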